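(* Fix $n$. The set $\mathcal{Q}=\mathcal{Q}(n)$ is closed under sums and products but is not closed under limits. The set $\mathcal{Q}'=\mathcal{Q}'(n)$ is closed under products but is not closed under limits.
   Context: Hermitian symmetric polynomials in $n$ variables: $r(z,\overline w)=\sum c_{\alpha\beta}z^\alpha\overline w^\beta$ with $c_{\alpha\beta}=\overline{c_{\beta\alpha}}$. $\mathcal{Q}(n)$: those $r$ with $r=\|F\|^2/\|G\|^2$ for holomorphic polynomial mappings $F,G$, $G\not\equiv0$. $\mathcal{Q}'(n)$: those $r$ with $r(z,\overline z)\ge0$ for all $z$ for which there exist a Hermitian symmetric $s\ge0$, not identically $0$, and a holomorphic polynomial mapping $F$ with $rs=\|F\|^2$. A set $\mathcal{S}$ of Hermitian symmetric polynomials is closed under limits if whenever $r_\lambda$, $\lambda$ in a closed set $K\subset\mathbb{R}^k$, is a family of Hermitian symmetric polynomials whose coefficient matrices depend continuously on $\lambda$, with $r_\lambda\in\mathcal{S}$, and $\lambda\to L\in K$, then $r_L\in\mathcal{S}$; ''not closed under limits'' means some such family has $r_\lambda\in\mathcal{S}$ for all $\lambda\ne L$ near $L$ (approaching $L$) but $r_L\notin\mathcal{S}$. *)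

(* Defs.v *)
From HB Require Import structures.
From mathcomp Require Import all_boot all_order all_algebra.
From mathcomp Require Import reals.
From mathcomp Require Import mpoly.
From mathcomp Require Import complex.

Set Implicit Arguments.
Unset Strict Implicit.
Unset Printing Implicit Defensive.

Import Order.TTheory GRing.Theory Num.Theory.
Local Open Scope ring_scope.

Section HermitianPolys.
Variables (R : realType) (n : nat).
Local Notation C := (complex R).

(* A polynomial r(z, wbar) in 2n variables: variables 0..n-1 are z_1..z_n,
   variables n..2n-1 are wbar_1..wbar_n.  Coefficient of the monomial (a,b)
   is c_{ab}. *)

Definition swap_idx (i : 'I_(n + n)) : 'I_(n + n) :=
  match split i with
  | inl j => rshift n j
  | inr j => lshift n j
  end.

Definition swap_mnm (m : 'X_{1..n + n}) : 'X_{1..n + n} :=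
  [multinom m (swap_idx i) | i < n + n].

Definition hermitian (r : {mpoly C[n + n]}) : Prop :=
  forall m : 'X_{1..n + n}, r@_m = conjc (r@_(swap_mnm m)).

Definition diag_pt (z : 'I_n -> C) : 'I_(n + n) -> C :=
  fun i => match split i with
           | inl j => z j
           | inr j => conjc (z j)
           end.

Definition evalH (r : {mpoly C[n + n]}) (z : 'I_n -> C) : C :=
  r.@[diag_pt z].

Definition normsq (F : seq {mpoly C[n]}) (z : 'I_n -> C) : C :=
  \sum_(f <- F) `|f.@[z]| ^+ 2.

(* Q(n): r = ||F||^2 / ||G||^2, G not identically 0, i.e. r ||G||^2 = ||F||^2 *)
Definition inQ (r : {mpoly C[n + n]}) : Prop :=
  hermitian r /\
  exists F G : seq {mpoly C[n]},
    has (fun g => g != 0) G /\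
    forall z : 'I_n -> C, evalH r z * normsq G z = normsq F z.

Definition inQ' (r : {mpoly C[n + n]}) : Prop :=
  hermitian r /\
  (forall z : 'I_n -> C, 0 <= evalH r z) /\
  exists s : {mpoly C[n + n]},
    [/\ hermitian s, s != 0, (forall z : 'I_n -> C, 0 <= evalH s z) &
    exists F : seq {mpoly C[n]},
      forall z : 'I_n -> C, evalH r z * evalH s z = normsq F z].

End HermitianPolys.

Section Limits.
Variables (R : realType) (k : nat).

Definition rv_near (x y : 'rV[R]_k) (d : R) : Prop :=
  forall i : 'I_k, `|x ord0 i - y ord0 i| < d.

Definition closed_set (K : 'rV[R]_k -> Prop) : Prop :=
  forall x, (forall d : R, 0 < d -> exists y, K y /\ rv_near x y d) -> K x.

Definition limit_point (K : 'rV[R]_k -> Prop) (L : 'rV[R]_k) : Prop :=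
  forall d : R, 0 < d -> exists y, [/\ K y, y != L & rv_near y L d].

Definition continuous_on (K : 'rV[R]_k -> Prop) (f : 'rV[R]_k -> complex R)
  : Prop :=
  forall x, K x -> forall e : R, 0 < e -> exists2 d : R, 0 < d &
    forall y, K y -> rv_near y x d -> Normc.normc (f y - f x) < e.
End Limits.

(* a family r_lambda, lambda in K, of Hermitian symmetric polynomials whose
   coefficient matrices (of a fixed finite size: degrees bounded by D) depend
   continuously on lambda *)
Definition continuous_family (R : realType) (n k : nat)
  (K : 'rV[R]_k -> Prop) (r : 'rV[R]_k -> {mpoly (complex R)[n + n]}) : Prop :=
  [/\ forall l, K l -> hermitian (r l),
      (exists D : nat, forall l, K l -> (msize (r l) <= D)%N) &
      forall m : 'X_{1..n + n}, continuous_on K (fun l => (r l)@_m)].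

Definition not_closed_under_limits (R : realType) (n : nat)
  (S : {mpoly (complex R)[n + n]} -> Prop) : Prop :=
  exists (k : nat) (K : 'rV[R]_k -> Prop) (L : 'rV[R]_k)
         (r : 'rV[R]_k -> {mpoly (complex R)[n + n]}),
    [/\ closed_set K /\ K L, limit_point K L, continuous_family K r,
        (exists2 d : R, 0 < d &
           forall l, K l -> l != L -> rv_near l L d -> S (r l)) &
        ~ S (r L)].

(* Main.v *)
Require Import Defs.
From HB Require Import structures.
From mathcomp Require Import all_boot all_order all_algebra.
From mathcomp Require Import reals.
From mathcomp Require Import mpoly.
From mathcomp Require Import complex.
From mathcomp Require Import fingroup perm.
From mathcomp Require Import ring lra zify.
Import GRing.Theory Num.Theory.
Local Open Scope ring_scope.

Module G1.
Import GRing.Theory.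
Local Open Scope ring_scope.
Set Implicit Arguments.
Unset Strict Implicit.

Section Grid.
Variable F : idomainType.

Lemma mpoly_morph_eq m (S : ringType) (f g : {mpoly F[m]} -> S) :
  {morph f : x y / x + y} -> {morph g : x y / x + y} -> f 0 = 0 -> g 0 = 0 ->
  {morph f : x y / x * y} -> {morph g : x y / x * y} -> f 1 = 1 -> g 1 = 1 ->
  (forall c, f c%:MP = g c%:MP) -> (forall i, f 'X_i = g 'X_i) -> f =1 g.
Proof.
move=> fD gD f0 g0 fM gM f1 g1 fC fX p.
rewrite (mpolyE p) (big_morph f fD f0) (big_morph g gD g0).
apply: eq_bigr => M _; rewrite -mul_mpolyC fM gM fC; congr (_ * _).
rewrite mpolyXE_id (big_morph f fM f1) (big_morph g gM g1).
have fXn : forall (h : {mpoly F[m]} -> S), {morph h : x y / x * y} -> h 1 = 1 ->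
  forall x k, h (x ^+ k) = h x ^+ k.
  move=> h hM h1 x k; elim: k => [|k IH]; first by rewrite !expr0.
  by rewrite !exprS hM IH.
apply: eq_bigr => i _.
by rewrite (fXn f) // (fXn g) // fX.
Qed.

Lemma muniX_widen m (j : 'I_m) : muni ('X_(widen_ord (leqnSn m) j) : {mpoly F[m.+1]}) = ('X_j)%:P.
Proof.
rewrite /muni mmapX mmap1U.
case: splitP => [k /= Hk|k /=].
  by congr ('X__)%:P; apply/val_inj.
by rewrite ord1 addn0 => /eqP; rewrite ltn_eqF.
Qed.

Lemma muniX_max m : muni ('X_ord_max : {mpoly F[m.+1]}) = 'X.
Proof.
rewrite /muni mmapX mmap1U.
case: splitP => [k /= Hk|//].
by move: (ltn_ord k); rewrite -Hk ltnn.
Qed.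

Lemma lift_max_widen m (j : 'I_m) : lift ord_max j = widen_ord (leqnSn m) j.
Proof. by apply/val_inj; rewrite /= /bump leqNgt ltn_ord. Qed.

Definition mmE m (P : {poly {mpoly F[m]}}) : {mpoly F[m.+1]} :=
  (map_poly (@mwiden m F) P).['X_ord_max].

Lemma mmE_muni m (p : {mpoly F[m.+1]}) : mmE (muni p) = p.
Proof.
apply: (@mpoly_morph_eq m.+1 _ (fun p => mmE (muni p)) id) => //.
- by move=> x y; rewrite /mmE !rmorphD hornerD.
- by rewrite /mmE !rmorph0 horner0.
- by move=> x y; rewrite /mmE !rmorphM hornerM.
- by rewrite /mmE !rmorph1 hornerC.
- by move=> c; rewrite /mmE muniC map_polyC hornerC /= mwidenC.
move=> i; case: (unliftP ord_max i) => [j ->|->].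
  rewrite lift_max_widen muniX_widen /mmE map_polyC hornerC.
  by rewrite /= mwidenX mnmwiden1.
by rewrite muniX_max /mmE map_polyX hornerX.
Qed.

Lemma muni_inj0 m (p : {mpoly F[m.+1]}) : muni p = 0 -> p = 0.
Proof. by move=> h; rewrite -(mmE_muni p) h /mmE rmorph0 horner0. Qed.

Lemma meval_muni m (w : 'I_m.+1 -> F) (p : {mpoly F[m.+1]}) :
  p.@[w] = (map_poly (meval (fun j => w (widen_ord (leqnSn m) j))) (muni p)).[w ord_max].
Proof.
pose g := fun p : {mpoly F[m.+1]} =>
  (map_poly (meval (fun j => w (widen_ord (leqnSn m) j))) (muni p)).[w ord_max].
apply: (@mpoly_morph_eq m.+1 _ (meval w) g) => //.
- exact: mevalD.
- by move=> x y; rewrite /g !rmorphD hornerD.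
- exact: meval0.
- by rewrite /g !rmorph0 horner0.
- exact: mevalM.
- by move=> x y; rewrite /g !rmorphM hornerM.
- exact: meval1.
- by rewrite /g !rmorph1 hornerC.
- by move=> c; rewrite /g mevalC muniC map_polyC hornerC /= mevalC.
move=> i; case: (unliftP ord_max i) => [j ->|->].
  by rewrite lift_max_widen /g mevalXU muniX_widen map_polyC hornerC /= mevalXU.
by rewrite /g mevalXU muniX_max map_polyX hornerX.
Qed.

Lemma poly_inf_roots (P : F -> Prop) (s : nat -> F) : injective s ->
  (forall k, P (s k)) -> forall q : {poly F}, (forall x, P x -> q.[x] = 0) -> q = 0.
Proof.
move=> sinj sP q hq; apply/eqP; apply/negPn/negP => qn0.
have h1 : all (root q) (mkseq s (size q)).
  by apply/allP => x /mapP [k _ ->]; apply/rootP; apply: hq.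
have h2 : uniq (mkseq s (size q)) by rewrite map_inj_uniq ?iota_uniq.
by have := max_poly_roots qn0 h1 h2; rewrite size_mkseq ltnn.
Qed.

Lemma grid_zero (P : F -> Prop) (s : nat -> F) : injective s ->
  (forall k, P (s k)) -> forall m (p : {mpoly F[m]}),
  (forall v : 'I_m -> F, (forall i, P (v i)) -> p.@[v] = 0) -> p = 0.
Proof.
move=> sinj sP; elim => [|m IH] p hp.
  rewrite -(mpolyKC p).
  have := hp (fun _ => s 0%N) (fun _ => sP 0%N).
  by rewrite -{1}(mpolyKC p) mevalC => ->.
apply: muni_inj0; apply/polyP => k; rewrite coef0.
apply: IH => v' hv'.
set Q := map_poly (meval v') (muni p).
have -> : ((muni p)`_k).@[v'] = Q`_k by rewrite coef_map.
suff -> : Q = 0 by rewrite coef0.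
apply: (poly_inf_roots sinj sP) => x hx.
pose w := fun i : 'I_m.+1 => if unlift ord_max i is Some j then v' j else x.
have := hp w; rewrite meval_muni.
have -> : w ord_max = x by rewrite /w unlift_none.
have -> : map_poly (meval (fun j => w (widen_ord (leqnSn m) j))) (muni p) = Q.
  apply: eq_map_poly => q; apply: meval_eq => j.
  by rewrite /w -lift_max_widen liftK.
apply => i; rewrite /w; case: (unlift ord_max i) => [j|//]; exact: hv'.
Qed.
End Grid.

End G1.
Import G1.

Module H1.
Import GRing.Theory Num.Theory.
Local Open Scope ring_scope.
Set Implicit Arguments.
Unset Strict Implicit.

Section Herm.
Variables (R : realType) (n : nat).
Local Notation C := (complex R).
Local Notation herm := (@Defs.hermitian R n).

Lemma split_l (i : 'I_n) : split (lshift n i) = inl i.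
Proof. exact: (unsplitK (inl _ i)). Qed.
Lemma split_r (i : 'I_n) : split (rshift n i) = inr i.
Proof. exact: (unsplitK (inr _ i)). Qed.

Lemma swap_idxK : involutive (@swap_idx n).
Proof.
move=> i; rewrite /swap_idx; case E: (split i) => [j|j].
  by rewrite split_r -[RHS](splitK i) E.
by rewrite split_l -[RHS](splitK i) E.
Qed.

Definition sig : 'S_(n + n) := perm (inv_inj swap_idxK).

Definition Phi (p : {mpoly C[n + n]}) : {mpoly C[n + n]} :=
  msym sig (map_mpoly (@conjc R) p).

Lemma PhiD : {morph Phi : x y / x + y}.
Proof. by move=> x y; rewrite /Phi rmorphD msymD. Qed.
Lemma PhiM : {morph Phi : x y / x * y}.
Proof. by move=> x y; rewrite /Phi rmorphM msymM. Qed.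

Lemma mcoeff_Phi (p : {mpoly C[n + n]}) m : (Phi p)@_m = conjc (p@_(swap_mnm m)).
Proof.
rewrite /Phi mcoeff_sym mcoeff_map_mpoly; congr (conjc (p@_ _)).
by apply/mnmP => i; rewrite !mnmE permE.
Qed.

Lemma hermE (p : {mpoly C[n + n]}) : herm p <-> Phi p = p.
Proof.
split => [h|h m].
  by apply/mpolyP => m; rewrite mcoeff_Phi -h.
by rewrite -mcoeff_Phi h.
Qed.

Lemma hermD (p q : {mpoly C[n + n]}) : herm p -> herm q -> herm (p + q).
Proof. by move=> /hermE hp /hermE hq; apply/hermE; rewrite PhiD hp hq. Qed.
Lemma hermM (p q : {mpoly C[n + n]}) : herm p -> herm q -> herm (p * q).
Proof. by move=> /hermE hp /hermE hq; apply/hermE; rewrite PhiM hp hq. Qed.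

Lemma PhiX i : Phi 'X_i = 'X_(swap_idx i).
Proof.
rewrite /Phi map_mpolyX msymX; congr 'X_[_].
apply/mnmP => j; rewrite !mnmE.
have sE : forall k, sig k = swap_idx k by move=> k; rewrite permE.
by rewrite -sE (canF_eq (permK sig)).
Qed.

Lemma PhiC (c : C) : Phi c%:MP = (conjc c)%:MP.
Proof.
rewrite /Phi map_mpolyC -alg_mpolyC msymZ msym1 alg_mpolyC //.
Qed.

Lemma evalD (p q : {mpoly C[n + n]}) z : evalH (p + q) z = evalH p z + evalH q z.
Proof. exact: mevalD. Qed.
Lemma evalM (p q : {mpoly C[n + n]}) z : evalH (p * q) z = evalH p z * evalH q z.
Proof. exact: mevalM. Qed.
Lemma evalC (c : C) z : evalH (c%:MP : {mpoly C[n + n]}) z = c.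
Proof. exact: mevalC. Qed.
Lemma evalXl i (z : 'I_n -> C) : evalH 'X_(lshift n i) z = z i.
Proof. by rewrite /evalH mevalXU /diag_pt split_l. Qed.
Lemma evalXr i (z : 'I_n -> C) : evalH 'X_(rshift n i) z = conjc (z i).
Proof. by rewrite /evalH mevalXU /diag_pt split_r. Qed.


Local Notation nsq := (@normsq R n).
Local Notation ev := (@evalH R n).

Lemma normsq_cat (F G : seq {mpoly C[n]}) z : nsq (F ++ G) z = nsq F z + nsq G z.
Proof. by rewrite /normsq big_cat. Qed.

Definition pmul (F G : seq {mpoly C[n]}) := [seq f * g | f <- F, g <- G].

Lemma normsq_pmul F G z : nsq (pmul F G) z = nsq F z * nsq G z.
Proof.
rewrite /normsq /pmul big_allpairs_dep mulr_suml; apply: eq_bigr => f _.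
rewrite mulr_sumr; apply: eq_bigr => g _.
by rewrite mevalM normrM exprMn.
Qed.

Lemma has_pmul (F G : seq {mpoly C[n]}) : has (fun g => g != 0) F ->
  has (fun g => g != 0) G -> has (fun g => g != 0) (pmul F G).
Proof.
move=> /hasP [f fF fn0] /hasP [g gG gn0]; apply/hasP; exists (f * g).
  by apply/allpairsP; exists (f, g).
exact: mulf_neq0.
Qed.

Lemma normsq_ge0 F z : 0 <= nsq F z.
Proof. by apply: sumr_ge0 => f _; rewrite exprn_ge0. Qed.

Lemma inQ_add (r1 r2 : {mpoly C[n + n]}) : inQ r1 -> inQ r2 -> inQ (r1 + r2).
Proof.
move=> [h1 [F1 [G1 [g1 e1]]]] [h2 [F2 [G2 [g2 e2]]]]; split; first exact: hermD.
exists (pmul F1 G2 ++ pmul F2 G1), (pmul G1 G2); split; first exact: has_pmul.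
move=> z; rewrite evalD normsq_cat !normsq_pmul -e1 -e2; ring.
Qed.

Lemma inQ_mul (r1 r2 : {mpoly C[n + n]}) : inQ r1 -> inQ r2 -> inQ (r1 * r2).
Proof.
move=> [h1 [F1 [G1 [g1 e1]]]] [h2 [F2 [G2 [g2 e2]]]]; split; first exact: hermM.
exists (pmul F1 F2), (pmul G1 G2); split; first exact: has_pmul.
move=> z; rewrite evalM !normsq_pmul -e1 -e2; ring.
Qed.

Lemma inQ'_mul (r1 r2 : {mpoly C[n + n]}) : inQ' r1 -> inQ' r2 -> inQ' (r1 * r2).
Proof.
move=> [h1 [p1 [s1 [hs1 sn1 ps1 [F1 e1]]]]] [h2 [p2 [s2 [hs2 sn2 ps2 [F2 e2]]]]].
split; first exact: hermM.
split; first by move=> z; rewrite evalM mulr_ge0.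
exists (s1 * s2); split; first exact: hermM.
- exact: mulf_neq0.
- by move=> z; rewrite evalM mulr_ge0.
exists (pmul F1 F2) => z; rewrite !evalM normsq_pmul -e1 -e2; ring.
Qed.
End Herm.

End H1.
Import H1.

Module P1.
Import Order.TTheory GRing.Theory Num.Theory.
Local Open Scope ring_scope.
Set Implicit Arguments.
Unset Strict Implicit.

Section Cert.
Variable (K : realFieldType) (N : nat) (lam : K).

Definition cR (j : nat) : K := (j.+1)%:R * ((N.+1)%:R - j%:R).
Definition aR (k : nat) : K :=
  if k == 0%N then (N.+1)%:R else if k == N.+2 then (N.+1)%:R
  else lam * cR k.-1 - 2.

Definition polB : {poly K} := \poly_(j < N.+2) cR j.
Definition polA : {poly K} := \poly_(k < N.+3) aR k.
Definition polP : {poly K} := 'X^2 + (lam - 2) *: 'X + 1.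

Lemma cert_id : polP * polB = polA.
Proof.
apply/polyP => k.
rewrite /polP !mulrDl -scalerAl mul1r !coefD coefZ coefXnM coefXM.
rewrite /polA /polB !coef_poly /aR.
case: k => [|k] /=; first by rewrite /cR; ring.
case: k => [|k] /=; first by rewrite /cR; ring.
have -> : (k.+2 - 2 = k)%N by rewrite subn2.
rewrite !ltnS !eqSS.
case: (ltngtP k N) => hk.
- rewrite (_ : (k <= N.+1)%N) ?(_ : (k == N) = false) /cR; try lia.
  ring.
- case: (ltngtP k N.+1) => hk2.
  + lia.
  + ring.
  + by rewrite hk2 /cR; ring.
- by rewrite hk leqnSn /cR; ring.
Qed.



Lemma cR_ge j : (j <= N)%N -> (N.+1)%:R <= cR j.
Proof.
move=> hj; rewrite /cR.
have e1 : (j.+1)%:R = j%:R + 1 :> K by rewrite -addn1 natrD.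
have e2 : (N.+1)%:R = N%:R + 1 :> K by rewrite -addn1 natrD.
have h1 : (j%:R : K) <= N%:R by rewrite ler_nat.
have h0 : (0 : K) <= j%:R by rewrite ler0n.
rewrite e1 e2; nra.
Qed.

Lemma cR_ge0 j : (j <= N.+1)%N -> 0 <= cR j.
Proof.
rewrite leq_eqVlt => /orP [/eqP ->|hj].
  by rewrite /cR subrr mulr0.
apply: le_trans (cR_ge _); first by rewrite ler0n.
by rewrite -ltnS.
Qed.

Lemma aR_ge0 k : (k < N.+3)%N -> 0 <= lam -> 2 <= lam * (N.+1)%:R -> 0 <= aR k.
Proof.
move=> hk3 l0 l2; rewrite /aR.
case: eqP => hk0; first by rewrite ler0n.
case: eqP => hk; first by rewrite ler0n.
have hk2 : (k.-1 <= N)%N by lia.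
have h := cR_ge hk2.
have : lam * (N.+1)%:R <= lam * cR k.-1 by rewrite ler_wpM2l.
lra.
Qed.
End Cert.

End P1.
Import P1.

Module E1.
Import Order.TTheory GRing.Theory Num.Theory.
Local Open Scope ring_scope.
Local Open Scope complex_scope.
Set Implicit Arguments.
Unset Strict Implicit.

Section Ex.
Variables (R : realType) (n : nat) (i0 : 'I_n).
Local Notation C := (complex R).
Local Notation herm := (@Defs.hermitian R n).
Local Notation nsq := (@normsq R n).
Local Notation ev := (@evalH R n).

Definition Xz : {mpoly C[n + n]} := 'X_(lshift n i0).
Definition Xw : {mpoly C[n + n]} := 'X_(rshift n i0).
Definition TT : {mpoly C[n + n]} := Xz * Xw.
Definition rfam (lam : R) : {mpoly C[n + n]} := (TT - 1) ^+ 2 + (lam%:C)%:MP * TT.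

Definition uu (z : 'I_n -> C) : R := complex.Re (z i0) ^+ 2 + complex.Im (z i0) ^+ 2.

Lemma uu_ge0 z : 0 <= uu z.
Proof. by rewrite /uu addr_ge0 ?sqr_ge0. Qed.

Lemma evalT z : ev TT z = (uu z)%:C.
Proof.
rewrite /TT evalM /Xz /Xw evalXl evalXr /uu add_Re2_Im2 sqr_normc //.
Qed.

Lemma eval_rfam lam z : ev (rfam lam) z = ((uu z - 1) ^+ 2 + lam * uu z)%:C.
Proof.
have e : ev (TT - 1) z = (uu z)%:C - 1.
  by rewrite /evalH mevalB meval1 -[TT.@[_]]/(ev TT z) evalT.
rewrite /rfam evalD expr2 evalM e evalM evalC evalT.
set u := uu z.
rewrite !(rmorphB, rmorphD, rmorphM, rmorph1, rmorphXn); ring.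
Qed.

Local Notation Phi := (@Phi R n).

Lemma Phi0 : Phi 0 = 0.
Proof. by rewrite /H1.Phi !raddf0. Qed.
Lemma Phi1 : Phi 1 = 1.
Proof. by rewrite -mpolyC1 PhiC conjc1. Qed.
Lemma PhiN x : Phi (- x) = - Phi x.
Proof. by rewrite /H1.Phi !raddfN. Qed.
Lemma PhiB x y : Phi (x - y) = Phi x - Phi y.
Proof. by rewrite PhiD PhiN. Qed.
Lemma PhiXn x k : Phi (x ^+ k) = Phi x ^+ k.
Proof. by elim: k => [|k IH]; rewrite ?expr0 ?Phi1 // !exprS PhiM IH. Qed.

Lemma PhiTT : Phi TT = TT.
Proof.
rewrite /TT PhiM /Xz /Xw !PhiX /swap_idx split_l split_r mulrC //.
Qed.

Lemma herm_rfam lam : herm (rfam lam).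
Proof.
apply/hermE; rewrite /rfam PhiD PhiXn PhiB !PhiTT PhiM PhiTT Phi1 PhiC conjc_real //.
Qed.

Definition mono_seq (c : nat -> R) M : seq {mpoly C[n]} :=
  [seq ((Num.sqrt (c j))%:C)%:MP * 'X_i0 ^+ j | j <- iota 0 M].

Lemma normsq_mono (c : nat -> R) M z : (forall j, (j < M)%N -> 0 <= c j) ->
  nsq (mono_seq c M) z = (\sum_(j < M) c j * uu z ^+ j)%:C.
Proof.
move=> hc; rewrite /normsq big_map (_ : iota 0 M = index_iota 0 M); last first.
  by rewrite /index_iota subn0.
rewrite big_mkord rmorph_sum; apply: eq_bigr => j _.
rewrite mevalM mevalC rmorphXn /= mevalXU normrM exprMn normrX -exprM mulnC exprM.
have hz : `|z i0| ^+ 2 = (uu z)%:C by rewrite -add_Re2_Im2.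
rewrite hz sqr_normc conjc_real -rmorphM -expr2 sqr_sqrtr ?hc //.
by rewrite rmorphM rmorphXn.
Qed.

Lemma cert_sum N lam u : ((u - 1) ^+ 2 + lam * u) * (\sum_(j < N.+2) @cR R N j * u ^+ j)
  = \sum_(k < N.+3) @aR R N lam k * u ^+ k.
Proof.
have H := congr1 (fun p => p.[u]) (@cert_id R N lam); move: H => /=.
rewrite hornerM (@horner_coef_wide _ N.+2 (polB R N)) ?size_poly //.
rewrite (@horner_coef_wide _ N.+3 (polA N lam)) ?size_poly //.
have e1 : \sum_(i < N.+2) (polB R N)`_i * u ^+ i = \sum_(j < N.+2) @cR R N j * u ^+ j.
  by apply: eq_bigr => j _; rewrite coef_poly ltn_ord.
have e2 : \sum_(i < N.+3) (polA N lam)`_i * u ^+ i = \sum_(j < N.+3) @aR R N lam j * u ^+ j.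
  by apply: eq_bigr => j _; rewrite coef_poly ltn_ord.
rewrite e1 e2 => <-; congr (_ * _).
rewrite /polP !hornerE; ring.
Qed.

Definition sfam N : {mpoly C[n + n]} := \sum_(j < N.+2) ((@cR R N j)%:C)%:MP * TT ^+ j.

Lemma eval_sfam N z : ev (sfam N) z = (\sum_(j < N.+2) @cR R N j * uu z ^+ j)%:C.
Proof.
rewrite /sfam /evalH rmorph_sum rmorph_sum; apply: eq_bigr => j _.
rewrite rmorphM /= mevalC rmorphXn /= -[TT.@[_]]/(ev TT z) evalT.
by rewrite -rmorphXn -rmorphM.
Qed.

Lemma herm_sfam N : herm (sfam N).
Proof.
apply/hermE; rewrite /sfam (big_morph Phi (@PhiD R n) Phi0); apply: eq_bigr => j _.
by rewrite PhiM PhiC conjc_real PhiXn PhiTT.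
Qed.

Lemma cR0 N : @cR R N 0 = (N.+1)%:R.
Proof. by rewrite /cR subr0 mul1r. Qed.

Lemma inQ_rfam lam N : 0 <= lam -> 2 <= lam * (N.+1)%:R ->
  inQ (rfam lam) /\ inQ' (rfam lam).
Proof.
move=> l0 l2.
have hc : forall j, (j < N.+2)%N -> 0 <= @cR R N j.
  by move=> j hj; apply: cR_ge0; rewrite -ltnS.
have ha : forall k, (k < N.+3)%N -> 0 <= @aR R N lam k.
  by move=> k hk; apply: aR_ge0.
have key : forall z, ev (rfam lam) z * (\sum_(j < N.+2) @cR R N j * uu z ^+ j)%:C =
   nsq (mono_seq (@aR R N lam) N.+3) z.
  by move=> z; rewrite normsq_mono // eval_rfam -rmorphM cert_sum.
have rge0 : forall z, 0 <= ev (rfam lam) z.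
  move=> z; rewrite eval_rfam ler0c addr_ge0 ?sqr_ge0 ?mulr_ge0 ?uu_ge0 //.
split.
  split; first exact: herm_rfam.
  exists (mono_seq (@aR R N lam) N.+3), (mono_seq (@cR R N) N.+2); split.
    apply/hasP; exists (((Num.sqrt (@cR R N 0))%:C)%:MP * 'X_i0 ^+ 0).
      by apply/mapP; exists 0%N; rewrite ?mem_iota.
    rewrite expr0 mulr1 mpolyC_eq0 fmorph_eq0 sqrtr_eq0 -ltNge cR0 ltr0n //.
  by move=> z; rewrite -key normsq_mono.
split; first exact: herm_rfam.
split; first exact: rge0.
exists (sfam N); split.
- exact: herm_sfam.
- apply/eqP => s0; have := eval_sfam N (fun _ => 0); rewrite s0 /evalH meval0.
  rewrite big_ord_recl big1 => [|j _]; last first.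
    by rewrite /uu /= expr0n /= addr0 /bump add1n expr0n /= mulr0.
  rewrite expr0 mulr1 addr0 cR0 => /esym/eqP; rewrite fmorph_eq0 pnatr_eq0 //.
- by move=> z; rewrite eval_sfam ler0c sumr_ge0 // => j _; rewrite mulr_ge0 ?hc ?exprn_ge0 ?uu_ge0.
exists (mono_seq (@aR R N lam) N.+3) => z; rewrite eval_sfam; exact: key.
Qed.
End Ex.

End E1.
Import E1.

Module N1.
Import Order.TTheory GRing.Theory Num.Theory.
Local Open Scope ring_scope.
Local Open Scope complex_scope.
Set Implicit Arguments.
Unset Strict Implicit.

Section Seqs.
Variable R : realType.
Local Notation C := (complex R).

Definition circ (k : nat) : C :=
  Complex ((1 - k%:R ^+ 2) / (1 + k%:R ^+ 2)) (2 * k%:R / (1 + k%:R ^+ 2)).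

Lemma den_neq0 (k : nat) : (1 + k%:R ^+ 2 : R) != 0.
Proof. by rewrite lt0r_neq0 // ltr_pwDl ?sqr_ge0. Qed.

Lemma circ_norm k : circ k * conjc (circ k) = 1.
Proof.
have h := den_neq0 k.
rewrite /circ /conjc; apply/eqP; rewrite eq_complex /=; apply/andP; split; apply/eqP.
  by field.
by ring.
Qed.

Lemma circ_inj : injective circ.
Proof.
move=> k l /eqP; rewrite eq_complex /= => /andP [/eqP h _].
have hk := den_neq0 k; have hl := den_neq0 l.
have : (k%:R ^+ 2 : R) = l%:R ^+ 2.
  move/eqP: h; rewrite eqr_div // => /eqP h2.
  nra.
by move/eqP; rewrite -!natrX eqr_nat eqn_exp2r // => /eqP.
Qed.

Definition rseq (k : nat) : C := ((k.+2)%:R)%:C.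
Lemma rseq_inj : injective rseq.
Proof. move=> k l; rewrite /rseq => /(@complexI R) /eqP. by rewrite eqr_nat eqSS => /eqP [] . Qed.
End Seqs.

Section NotIn.
Variables (R : realType) (n : nat) (i0 : 'I_n).
Local Notation C := (complex R).
Local Notation nsq := (@normsq R n).
Local Notation ev := (@evalH R n).
Local Notation uu := (@uu R n i0).
Local Notation rfam := (@rfam R n i0).

Lemma nsq_zero (F : seq {mpoly C[n]}) z : nsq F z = 0 -> forall f, f \in F -> f.@[z] = 0.
Proof.
move/eqP; rewrite /normsq psumr_eq0 => [/allP h f fF|f _]; last by rewrite exprn_ge0.
by have := h f fF; rewrite implyTb expf_eq0 /= normr_eq0 => /eqP.
Qed.

Lemma uu_val z : (uu z)%:C = z i0 * conjc (z i0).
Proof. by rewrite /E1.uu add_Re2_Im2 sqr_normc. Qed.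

Lemma ev_r0 z : ev (rfam 0) z = ((uu z - 1) ^+ 2)%:C.
Proof. by rewrite eval_rfam mul0r addr0. Qed.

Lemma F_zero (F : seq {mpoly C[n]}) (X : ('I_n -> C) -> C) :
  (forall z, ev (rfam 0) z * X z = nsq F z) -> forall z, nsq F z = 0.
Proof.
move=> e.
have fz : forall f, f \in F -> f = 0.
  move=> f fF.
  apply: (@grid_zero _ (fun x => x * conjc x = 1) (@circ R) (@circ_inj R) (@circ_norm R)).
  move=> v hv.
  have u1 : uu v = 1 by apply: (@complexI R); rewrite uu_val hv.
  apply: (nsq_zero _ fF); rewrite -e ev_r0 u1 subrr expr0n /= mul0r //.
move=> z; rewrite /normsq big1_seq // => f /= fF.
by rewrite (fz f fF) meval0 normr0 expr0n.
Qed.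

Lemma notQ0 : ~ inQ (rfam 0).
Proof.
move=> [_ [F [G [hG e]]]]; have nF := F_zero e.
move/hasP: hG => [g gG]; apply/negP; rewrite negbK; apply/eqP.
apply: (@grid_zero _ (fun x => exists y : R, 1 < y /\ x = y%:C) (@rseq R) (@rseq_inj R)).
  by move=> k; exists (k.+2)%:R; split => //; rewrite ltr1n.
move=> v hv; have [y [y1 ey]] := hv i0.
have uy : uu v = y ^+ 2 by rewrite /E1.uu ey /= expr0n /= addr0.
have : ev (rfam 0) v != 0.
  rewrite ev_r0 uy fmorph_eq0 sqrf_eq0 subr_eq0.
  apply/eqP => h; nra.
move=> hn; have := e v; rewrite nF => /eqP; rewrite mulf_eq0 (negbTE hn) /= => /eqP h.
exact: nsq_zero h g gG.
Qed.

Definition ii : C := Complex 0 1.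
Lemma iiE : ii * ii = -1.
Proof. by apply/eqP; rewrite eq_complex /= !mul0r !mul1r sub0r addr0 oppr0 !eqxx. Qed.
Lemma conj_ii : conjc ii = - ii.
Proof. by apply/eqP; rewrite eq_complex /= oppr0 !eqxx. Qed.

Definition lqf (i : 'I_(n + n)) : {mpoly C[n + n]} :=
  match split i with
  | inl j => 'X_(lshift n j) + ii%:MP * 'X_(rshift n j)
  | inr j => 'X_(lshift n j) - ii%:MP * 'X_(rshift n j)
  end.
Definition lq := [tuple lqf i | i < n + n].

Lemma eval_lq (v : 'I_(n + n) -> C) i : (tnth lq i).@[v] =
  match split i with
  | inl j => v (lshift n j) + ii * v (rshift n j)
  | inr j => v (lshift n j) - ii * v (rshift n j)
  end.
Proof.
rewrite tnth_mktuple /lqf; case: (split i) => j.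
  by rewrite mevalD mevalM mevalC !mevalXU.
by rewrite mevalB mevalM mevalC !mevalXU.
Qed.

Lemma diag_zero (s : {mpoly C[n + n]}) : (forall z, uu z != 1 -> ev s z = 0) -> s = 0.
Proof.
move=> hs.
have q0 : s \mPo lq = 0.
  apply: (@grid_zero _ (fun x => exists y : R, 1 < y /\ x = y%:C) (@rseq R) (@rseq_inj R)).
    by move=> k; exists (k.+2)%:R; split => //; rewrite ltr1n.
  move=> v hv; rewrite comp_mpoly_meval.
  pose z := fun j => v (lshift n j) + ii * v (rshift n j).
  have -> : s.@[fun i => (tnth lq i).@[v]] = ev s z.
    apply: meval_eq => i; rewrite eval_lq /diag_pt; case: (split i) => j //.
    have [a [_ ea]] := hv (lshift n j); have [b [_ eb]] := hv (rshift n j).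
    by rewrite /z ea eb; apply/eqP; rewrite eq_complex /=; apply/andP; split; apply/eqP; ring.
  apply: hs.
  have [a [a1 ea]] := hv (lshift n i0); have [b [b1 eb]] := hv (rshift n i0).
  have hz : z i0 = Complex a b.
    rewrite /z ea eb; apply/eqP; rewrite eq_complex /=.
    by apply/andP; split; apply/eqP; ring.
  rewrite /E1.uu hz /=; apply/eqP => h; nra.
apply: (@grid_zero _ (fun _ => True) (@rseq R) (@rseq_inj R)) => // w _.
pose v := fun i : 'I_(n + n) => match split i with
  | inl j => (w (lshift n j) + w (rshift n j)) / 2
  | inr j => ii * (w (rshift n j) - w (lshift n j)) / 2
  end.
have h2 : (2 : C) != 0 by rewrite pnatr_eq0.
have : (s \mPo lq).@[v] = s.@[w].
  rewrite comp_mpoly_meval; apply: meval_eq => i; rewrite eval_lq /v.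
  case E: (split i) => [j|j].
    have -> : i = lshift n j by rewrite -(splitK i) E.
    rewrite !split_l split_r !mulrA iiE; by field.
  have ei : i = rshift n j by rewrite -(splitK i) E.
  rewrite ei !split_r split_l !mulrA iiE; by field.
by rewrite q0 meval0.
Qed.

Lemma notQ'0 : ~ inQ' (rfam 0).
Proof.
move=> [_ [_ [s [_ sn0 _ [F e]]]]]; have nF := F_zero e.
move/eqP: sn0; apply; apply: diag_zero => z hz.
have := e z; rewrite nF ev_r0 => /eqP; rewrite mulf_eq0 fmorph_eq0 sqrf_eq0 subr_eq0.
by rewrite (negbTE hz) /= => /eqP.
Qed.
End NotIn.

End N1.
Import N1.

Module M1.
Import Order.TTheory GRing.Theory Num.Theory.
Local Open Scope ring_scope.
Local Open Scope complex_scope.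
Set Implicit Arguments.
Unset Strict Implicit.

Section Lim.
Variables (R : realType) (n : nat) (i0 : 'I_n).
Local Notation C := (complex R).
Local Notation rfam := (@rfam R n i0).
Local Notation TT := (@TT R n i0).

Lemma normc_real (a : R) : Normc.normc (a%:C) = `|a|.
Proof. by rewrite /Normc.normc /= expr0n /= addr0 sqrtr_sqr. Qed.

Lemma noncl (S : {mpoly C[n + n]} -> Prop) :
  (forall lam N, 0 <= lam -> 2 <= lam * (N.+1)%:R -> S (rfam lam)) ->
  ~ S (rfam 0) -> not_closed_under_limits S.
Proof.
move=> hS nS.
exists 1%N, (fun l : 'rV[R]_1 => 0 <= l ord0 ord0 <= 1), 0,
  (fun l => rfam (l ord0 ord0)).
split.
- split; last by rewrite mxE lexx ler01.
  move=> x hx; apply/andP; split; rewrite leNgt; apply/negP => hlt.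
    have [|y [/andP [y0 y1] hy]] := hx (- x ord0 ord0); first by rewrite oppr_gt0.
    move: (hy ord0); rewrite ltr_norml; lra.
  have [|y [/andP [y0 y1] hy]] := hx (x ord0 ord0 - 1); first by rewrite subr_gt0.
  move: (hy ord0); rewrite ltr_norml; lra.
- move=> d d0; pose e := d / (d + 2).
  have de : e * (d + 2) = d by rewrite /e divfK // lt0r_neq0 //; lra.
  have e0 : 0 < e by rewrite /e divr_gt0 //; lra.
  exists (\row_(i < 1) e); split.
  + rewrite mxE; apply/andP; split; nra.
  + apply/eqP => /matrixP /(_ ord0 ord0); rewrite !mxE => h; lra.
  + by move=> i; rewrite ord1 !mxE subr0 gtr0_norm //; nra.
- split.
  + by move=> l _; apply: herm_rfam.
  + exists (maxn (msize ((TT - 1) ^+ 2)) (msize TT)) => l _.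
    rewrite /E1.rfam; apply: (leq_trans (msizeD_le _ _)).
    rewrite geq_max leq_maxl /= mul_mpolyC.
    exact: (leq_trans (msizeZ_le _ _) (leq_maxr _ _)).
  + move=> m x _ e e0.
    pose Nt := Normc.normc (TT@_m).
    have Nt0 : 0 <= Nt by rewrite /Nt /Normc.normc; case: (TT@_m) => a b; apply: sqrtr_ge0.
    exists (e / (Nt + 1)); first by rewrite divr_gt0 //; lra.
    move=> y _ hy; have := hy ord0.
    rewrite /E1.rfam !mcoeffD !mcoeffCM opprD addrACA subrr add0r -mulrBl -rmorphB.
    rewrite Normc.normcM normc_real -/Nt => h.
    have de : e / (Nt + 1) * (Nt + 1) = e by rewrite divfK // lt0r_neq0 //; lra.
    have ha := normr_ge0 (y ord0 ord0 - x ord0 ord0).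
    nra.
- exists 1; first exact: ltr01.
  move=> l /andP [l0 l1] ln0 _.
  have lp : 0 < l ord0 ord0.
    rewrite lt_def l0 andbT; apply: contraNneq ln0 => h.
    by apply/eqP/matrixP => i j; rewrite !ord1 mxE h.
  set lam := l ord0 ord0 in l0 l1 lp *.
  have two0 : (0 : R) < 2 by rewrite ltr0n.
  have hb := @archi_boundP _ (2 / lam) (ltW (divr_gt0 two0 lp)).
  apply: (hS lam (Num.Def.archi_bound (2 / lam))) => //.
  have : 2 / lam * lam = 2 by rewrite divfK // lt0r_neq0.
  have : (Num.Def.archi_bound (2 / lam))%:R <= (Num.Def.archi_bound (2 / lam)).+1%:R :> R.
    by rewrite ler_nat.
  nra.
- by rewrite mxE.
Qed.
End Lim.


End M1.
Import M1.

Unset Implicit Arguments.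
Set Strict Implicit.
Theorem lemma2p4 (R : realType) (n : nat) : (0 < n)%N ->
  [/\ (forall r1 r2 : {mpoly (complex R)[n + n]},
         inQ r1 -> inQ r2 -> inQ (r1 + r2) /\ inQ (r1 * r2)),
      not_closed_under_limits (@inQ R n),
      (forall r1 r2 : {mpoly (complex R)[n + n]},
         inQ' r1 -> inQ' r2 -> inQ' (r1 * r2)) &
      not_closed_under_limits (@inQ' R n)].
Proof.
move=> n0; pose i0 : 'I_n := Ordinal n0.
split.
- by move=> r1 r2 h1 h2; split; [apply: inQ_add | apply: inQ_mul].
- apply: (@noncl R n i0) => [lam N h1 h2|]; first exact: (inQ_rfam i0 h1 h2).1.
  exact: notQ0.
- by move=> r1 r2 h1 h2; apply: inQ'_mul.
- apply: (@noncl R n i0) => [lam N h1 h2|]; first exact: (inQ_rfam i0 h1 h2).2.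
  exact: notQ'0.
Qed.
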